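(* Let $n\ge 1$, $k\ge 1$, and let $K=\sum_{i=1}^{k-1}|i-1\rangle\langle i|$ be the $k\times k$ nilpotent Jordan block acting on $\mathbb{C}^k$ with basis $|0\rangle,\ldots,|k-1\rangle$. Let $\mathcal{S}\subseteq(\mathbb{C}^k)^{\otimes n}$ be the permutation-symmetric subspace. For $0\le j\le k-1$ define $$|E_j\rangle=\sum_{\substack{i_1,\ldots,i_n\ge 0\\ i_1+\cdots+i_n=j}}|i_1\rangle|i_2\rangle\cdots|i_n\rangle.$$ Then a vector $|\psi\rangle\in\mathcal{S}$ satisfies $K_{(1)}|\psi\rangle\in\mathcal{S}$ if and only if $|\psi\rangle=\sum_{j=0}^{k-1}\alpha_j|E_j\rangle$ for some complex numbers $\alpha_0,\ldots,\alpha_{k-1}$.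
   Context: $\mathcal{S}$ is the set of vectors in $(\mathbb{C}^k)^{\otimes n}$ invariant under all permutations of the $n$ tensor factors. $K_{(1)}$ denotes $K\otimes\mathbb{I}\otimes\cdots\otimes\mathbb{I}$ on $(\mathbb{C}^k)^{\otimes n}$. *)

(* Defs.v *)
From HB Require Import structures.
From mathcomp Require Import all_boot all_order all_algebra all_fingroup.
From mathcomp Require Import complex.
From mathcomp Require Import Rstruct.

Set Implicit Arguments. Unset Strict Implicit. Unset Printing Implicit Defensive.
Import Order.TTheory GRing.Theory Num.Theory.
Local Open Scope ring_scope.

Definition C : Type := complex Rdefinitions.R.

(* A vector of (C^k)^{⊗ n}: its coordinates in the product basis
   |i_1>|i_2>...|i_n>, indexed by t : 'I_n -> 'I_k (t j = i_{j+1}). *)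
Definition tensor (n k : nat) : Type := {ffun 'I_n -> 'I_k} -> C.

Definition permute_factors (n k : nat) (s : 'S_n) (psi : tensor n k) : tensor n k :=
  fun t => psi [ffun i => t ((s^-1)%g i)].

Definition in_sym (n k : nat) (psi : tensor n k) : Prop :=
  forall (s : 'S_n) (t : {ffun 'I_n -> 'I_k}), permute_factors s psi t = psi t.

(* Nilpotent Jordan block K = sum_{i=1}^{k-1} |i-1><i| : entry <a|K|b> = [b = a+1]. *)
Definition Kjordan (k : nat) : 'M[C]_k :=
  \matrix_(a < k, b < k) (if (b : nat) == a.+1 then 1 else 0).

Definition apply_first (n k : nat) (i0 : 'I_n) (M : 'M[C]_k) (psi : tensor n k)
  : tensor n k :=
  fun t => \sum_(b < k) M (t i0) b * psi [ffun i => if i == i0 then b else t i].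

Definition E_vec (n k : nat) (j : nat) : tensor n k :=
  fun t => if (\sum_(i < n) (t i : nat))%N == j then 1 else 0.

(* Main.v *)
Require Import Defs.
From HB Require Import structures.
From mathcomp Require Import all_boot all_order all_algebra all_fingroup.
From mathcomp Require Import complex.
From mathcomp Require Import Rstruct.
From mathcomp Require Import zify.
Import GRing.Theory Num.Theory.
Local Open Scope ring_scope.
Set Implicit Arguments.

Definition upd n k (t : {ffun 'I_n -> 'I_k}) (i : 'I_n) (b : 'I_k) :
  {ffun 'I_n -> 'I_k} := [ffun j => if j == i then b else t j].

Lemma sum_upd n k (t : {ffun 'I_n -> 'I_k}) i b :
  (\sum_j (upd t i b j : nat) + t i = \sum_j (t j : nat) + b)%N.
Proof.
rewrite (bigD1 i) //= [in RHS](bigD1 i) //= ffunE eqxx.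
under eq_bigr => j hj do rewrite ffunE (negbTE hj).
lia.
Qed.

Lemma phiE n k' (i0 : 'I_n) (psi : tensor n k'.+1) t :
  apply_first i0 (Kjordan k'.+1) psi t =
  if ((t i0).+1 < k'.+1)%N then psi (upd t i0 (inord (t i0).+1)) else 0.
Proof.
rewrite /apply_first. under eq_bigr => b _ do rewrite mxE.
case: ifP => h.
- rewrite (bigD1 (inord (t i0).+1)) //= inordK // eqxx mul1r big1 ?addr0 //.
  move=> b hb; rewrite ifN ?mul0r //; apply: contra hb => /eqP e.
  by apply/eqP/val_inj; rewrite /= inordK // e.
- apply: big1 => b _; case: eqP => [e|]; last by rewrite mul0r.
  by move: h; rewrite -e ltn_ord.
Qed.

Lemma key n k' (i0 i : 'I_n) (psi : tensor n k'.+1) (u : {ffun 'I_n -> 'I_k'.+1}) :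
  in_sym psi -> in_sym (apply_first i0 (Kjordan k'.+1) psi) ->
  i != i0 -> (0 < u i)%N ->
  apply_first i0 (Kjordan k'.+1) psi (upd u i (inord (u i).-1)) = psi u.
Proof.
move=> sp sphi ni ui.
set t := upd u i _.
set s := tperm i0 i.
rewrite -(sphi s t) /permute_factors phiE.
have hl : ((u i).-1 < k'.+1)%N by rewrite (leq_ltn_trans (leq_pred _) (ltn_ord _)).
have e0 : ([ffun j => t (s^-1%g j)] i0 : nat) = (u i).-1.
  by rewrite ffunE tpermV tpermL ffunE eqxx inordK.
rewrite e0 prednK // ltn_ord.
rewrite -(sp s u) /permute_factors. congr psi. apply/ffunP => j.
rewrite !ffunE tpermV.
case: (eqVneq j i0) => [->|nj].
- by rewrite tpermL; apply/val_inj; rewrite /= inordK ?prednK.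
- rewrite /t; case: tpermP => [e|e|ne1 ne2]; rewrite ?ffunE.
  + by rewrite e eqxx in nj.
  + by rewrite eq_sym (negbTE ni).
  + by case: eqP.
Qed.

Lemma hsum k' (a : 'I_k'.+1 -> C) (s : nat) :
  \sum_(j < k'.+1) a j * (if s == j then 1 else 0) =
  if (s < k'.+1)%N then a (inord s) else 0.
Proof.
case: ifP => h.
- rewrite (bigD1 (inord s)) //= inordK // eqxx mulr1 big1 ?addr0 // => j hj.
  rewrite ifN ?mulr0 //; apply: contra hj => /eqP e.
  by apply/eqP/val_inj; rewrite /= inordK.
- apply: big1 => j _; rewrite ifN ?mulr0 //; apply/negP => /eqP e.
  by move: h; rewrite e ltn_ord.
Qed.

Unset Implicit Arguments.

Theorem theorem5 (n k : nat) (hn : (0 < n)%N) (hk : (0 < k)%N)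
  (psi : tensor n k) :
  in_sym psi ->
  (in_sym (apply_first (Ordinal hn) (Kjordan k) psi) <->
   exists alpha : 'I_k -> C,
     forall t : {ffun 'I_n -> 'I_k},
       psi t = \sum_(j < k) alpha j * @E_vec n k j t).
Proof.
move: psi; case: k hk => [//|k'] hk psi sp.
set i0 := Ordinal hn.
split.
- move=> sphi.
  pose c (s : nat) : {ffun 'I_n -> 'I_k'.+1} :=
    [ffun j => if j == i0 then inord s else ord0].
  pose g (s : nat) := if (s < k'.+1)%N then psi (c s) else 0.
  pose m (t : {ffun 'I_n -> 'I_k'.+1}) := (\sum_(j | j != i0) (t j : nat))%N.
  have sumt : forall t : {ffun 'I_n -> 'I_k'.+1},
      (\sum_j (t j : nat) = t i0 + m t)%N.
    by move=> t; rewrite (bigD1 i0).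
  have base : forall t : {ffun 'I_n -> 'I_k'.+1},
      ~~ [exists i, (i != i0) && (0 < t i)%N] -> psi t = g (\sum_j (t j : nat))%N.
    move=> t hne.
      have H : forall j, j != i0 -> (t j : nat) = 0%N.
        move=> j nj; apply/eqP; rewrite -leqn0 leqNgt; apply/negP => tj.
        by move/existsP: hne; apply; exists j; rewrite nj.
      have Ht : t = c (t i0).
        apply/ffunP => j; rewrite ffunE; case: (eqVneq j i0) => [->|nj];
          apply/val_inj.
        - by rewrite /= inordK.
        - by rewrite /= H.
      have Hs : (\sum_j (t j : nat) = t i0)%N.
        rewrite sumt /m big1 ?addn0 // => j nj; exact: H.
      by rewrite Hs /g ltn_ord -Ht.
  have claim : forall N t, (m t <= N)%N -> psi t = g (\sum_j (t j : nat))%N.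
    move=> N; elim: N => [|N IH] t hm.
    1-2: case: (boolP [exists i, (i != i0) && (0 < t i)%N]) => [/existsP [i /andP [ni ti]]|hne].
    + have : (t i <= m t)%N by rewrite /m (bigD1 i) //= leq_addr.
      lia.
    + exact: base.
    + have hmi : (t i <= m t)%N by rewrite /m (bigD1 i) //= leq_addr.
      have hti0 : upd t i (inord (t i).-1) i0 = t i0.
        by rewrite ffunE eq_sym (negbTE ni).
      have hl : ((t i).-1 < k'.+1)%N
        by rewrite (leq_ltn_trans (leq_pred _) (ltn_ord _)).
      rewrite -(@key _ _ i0 i psi t sp sphi ni ti) phiE hti0.
      case: ifP => h.
      * set t1 := upd t i _. set t2 := upd t1 i0 _.
        have s1 := sum_upd t i (inord (t i).-1).
        have s2 := sum_upd t1 i0 (inord (t i0).+1).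
        rewrite inordK // in s1. rewrite inordK // hti0 in s2.
        have v2 : (t2 i0 : nat) = (t i0).+1 by rewrite ffunE eqxx inordK.
        rewrite -/t1 in s1; rewrite -/t2 in s2. have a1 := sumt t. have a2 := sumt t2.
        have -> : (\sum_j (t j : nat) = \sum_j (t2 j : nat))%N by lia.
        apply: IH. lia.
      * have a1 := sumt t.
        rewrite /g ifN //. lia.
    + exact: base.
  exists (fun j : 'I_k'.+1 => psi (c j)); move=> t.
  rewrite (claim (m t)) //. rewrite /E_vec hsum /g.
  case: ifP => // h; by rewrite inordK.
- move=> [alpha Ha].
  pose h (s : nat) := \sum_(j < k'.+1) alpha j * (if s == j then 1 else 0).
  have Hp : forall t, psi t = h (\sum_j (t j : nat))%N by move=> t; rewrite Ha.
  have Hphi : forall t, apply_first i0 (Kjordan k'.+1) psi t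
      = h (\sum_j (t j : nat)).+1%N.
    move=> t; rewrite phiE; case: ifP => c1.
    + rewrite Hp; congr h; have := sum_upd t i0 (inord (t i0).+1).
      rewrite inordK //; lia.
    + rewrite /h hsum ifN //.
      have : (t i0 <= \sum_j (t j : nat))%N by rewrite (bigD1 i0) //= leq_addr.
      move: c1; lia.
  move=> s t; rewrite /permute_factors !Hphi.
  have -> : (\sum_j ([ffun i => t (s^-1%g i)] j : nat) = \sum_j (t j : nat))%N.
    rewrite [RHS](reindex_inj (@perm_inj _ s^-1%g)).
    by apply: eq_bigr => j _; rewrite ffunE.
  by [].
Qed.
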